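(* Let $n\geq 4$ and let $\nu :B_n\to GL_{n+1}(\mathbb{C})$ be a non-trivial homogeneous $3$-local representation of $B_n$. Then $\nu$ is equivalent to one of the eight representations $\nu_j$, $1\leq j\leq 8$, given by $\nu_j(\sigma_i)=\mathrm{diag}(I_{i-1},M_j,I_{n-i-1})$ for all $1\leq i \leq n-1$, where: (1) $M_1=\begin{pmatrix} 1&0&0\\ 0&m_{22}&m_{23}\\ 0&\frac{1-m_{22}}{m_{23}}&0\end{pmatrix}$, with $m_{22}\neq1$, $m_{23}\neq0$; (2) $M_2=\begin{pmatrix} 0&m_{12}&0\\ \frac{1-m_{22}}{m_{12}}&m_{22}&0\\ 0&0&1\end{pmatrix}$, with $m_{22}\neq1$, $m_{12}\neq0$; (3) $M_3=\begin{pmatrix} 1&-\frac{m_{22}}{m_{32}}&0\\ 0&m_{22}&0\\ 0&m_{32}&1\end{pmatrix}$, with $m_{22}m_{32}\neq0$; (4) $M_4=\begin{pmatrix} 1&0&0\\ -\frac{m_{22}}{m_{23}}&m_{22}&m_{23}\\ 0&0&1\end{pmatrix}$, with $m_{23}m_{22}\neq0$; (5) $M_5=\begin{pmatrix} 1&0&0\\ 0&0&m_{23}\\ 0&m_{32}&1-m_{23}m_{32}\end{pmatrix}$, with $m_{23}m_{32}\neq0$; (6) $M_6=\begin{pmatrix} 1-m_{12}m_{21}&m_{12}&0\\ m_{21}&0&0\\ 0&0&1\end{pmatrix}$, with $m_{12}m_{21}\neq0$; (7) $M_7=\begin{pmatrix} 1&0&0\\ 0&0&m_{23}\\ 0&m_{32}&0\end{pmatrix}$,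 with $m_{23}m_{32}\neq0$; (8) $M_8=\begin{pmatrix} 0&m_{12}&0\\ m_{21}&0&0\\ 0&0&1\end{pmatrix}$, with $m_{12}m_{21}\neq0$; all entries being complex numbers.
   Context: The braid group $B_n$ has generators $\sigma_1,\dots,\sigma_{n-1}$ with relations $\sigma_i\sigma_{i+1}\sigma_i=\sigma_{i+1}\sigma_i\sigma_{i+1}$ ($1\le i\le n-2$) and $\sigma_i\sigma_j=\sigma_j\sigma_i$ ($|i-j|\ge2$). A representation $\nu:B_n\to GL_{n+1}(\mathbb{C})$ is homogeneous $3$-local if there is a matrix $M\in M_3(\mathbb{C})$ with $\nu(\sigma_i)=\mathrm{diag}(I_{i-1},M,I_{n-i-1})$ (block diagonal, $I_r$ the $r\times r$ identity) for all $1\le i\le n-1$. ''Non-trivial'' means not sending every $\sigma_i$ to the identity. Two representations are equivalent if they are conjugate by a fixed invertible matrix. *)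

(* Defs.v *)
(* C = (complex R) with R : realType, i.e. the complex numbers R[i]. *)
From HB Require Import structures.
From mathcomp Require Import all_boot all_algebra.
From mathcomp Require Import reals.
From mathcomp Require Import complex.
Set Implicit Arguments. Unset Strict Implicit. Unset Printing Implicit Defensive.
Import GRing.Theory.
Local Open Scope ring_scope.

(* local_mx n i M = diag(I_{i-1}, M, I_{n-i-1}) in 'M_(n+1), for 1 <= i <= n-1. *)
Definition local_mx {F : pzRingType} (n i : nat) (M : 'M[F]_3) : 'M[F]_(n.+1) :=
  \matrix_(r < n.+1, c < n.+1)
    if [&& (i.-1 <= r)%N, (r < i.+2)%N, (i.-1 <= c)%N & (c < i.+2)%N]
    then M (inord (r - i.-1)) (inord (c - i.-1))
    else (r == c)%:R.

(* nu : sigma_i |-> A i (1 <= i <= n-1) defines a representation of B_n in GL_{n+1}: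
   the images are invertible and satisfy the braid relations of the presentation. *)
Definition braid_rep {F : comUnitRingType} (n : nat) (A : nat -> 'M[F]_(n.+1)) : Prop :=
  [/\ forall i, (1 <= i <= n.-1)%N -> A i \in unitmx,
      forall i, (1 <= i)%N -> (i.+1 <= n.-1)%N ->
        A i *m A i.+1 *m A i = A i.+1 *m A i *m A i.+1
    & forall i j, (1 <= i <= n.-1)%N -> (1 <= j <= n.-1)%N -> (i.+1 < j)%N ->
        A i *m A j = A j *m A i].

Definition homog_3local {F : comUnitRingType} (n : nat) (M : 'M[F]_3) : Prop :=
  braid_rep (fun i => local_mx n i M).

Definition nontrivial_rep {F : comUnitRingType} (n : nat) (A : nat -> 'M[F]_(n.+1)) : Prop :=
  exists i, (1 <= i <= n.-1)%N /\ A i != 1%:M.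

(* equivalence: conjugate by a fixed invertible matrix P (on generators, hence on B_n) *)
Definition equiv_rep {F : comUnitRingType} (n : nat) (A B : nat -> 'M[F]_(n.+1)) : Prop :=
  exists P : 'M[F]_(n.+1), P \in unitmx /\
    forall i, (1 <= i <= n.-1)%N -> A i = invmx P *m B i *m P.

Section Mats.
Variable F : fieldType.
Definition mx3 (l : seq (seq F)) : 'M[F]_3 :=
  \matrix_(r < 3, c < 3) nth 0 (nth [::] l r) c.
Definition M1 (m22 m23 : F) : 'M[F]_3 :=
  mx3 [:: [:: 1; 0; 0]; [:: 0; m22; m23]; [:: 0; (1 - m22) / m23; 0]].
Definition M2 (m22 m12 : F) : 'M[F]_3 :=
  mx3 [:: [:: 0; m12; 0]; [:: (1 - m22) / m12; m22; 0]; [:: 0; 0; 1]].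
Definition M3 (m22 m32 : F) : 'M[F]_3 :=
  mx3 [:: [:: 1; - (m22 / m32); 0]; [:: 0; m22; 0]; [:: 0; m32; 1]].
Definition M4 (m22 m23 : F) : 'M[F]_3 :=
  mx3 [:: [:: 1; 0; 0]; [:: - (m22 / m23); m22; m23]; [:: 0; 0; 1]].
Definition M5 (m23 m32 : F) : 'M[F]_3 :=
  mx3 [:: [:: 1; 0; 0]; [:: 0; 0; m23]; [:: 0; m32; 1 - m23 * m32]].
Definition M6 (m12 m21 : F) : 'M[F]_3 :=
  mx3 [:: [:: 1 - m12 * m21; m12; 0]; [:: m21; 0; 0]; [:: 0; 0; 1]].
Definition M7 (m23 m32 : F) : 'M[F]_3 :=
  mx3 [:: [:: 1; 0; 0]; [:: 0; 0; m23]; [:: 0; m32; 0]].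
Definition M8 (m12 m21 : F) : 'M[F]_3 :=
  mx3 [:: [:: 0; m12; 0]; [:: m21; 0; 0]; [:: 0; 0; 1]].

(* the eight families, with their parameter conditions (parameters a, b in the order
   written in the definitions above) *)
Definition nu_family (j : nat) (a b : F) : option 'M[F]_3 :=
  match j with
  | 1 => if (a != 1) && (b != 0) then Some (M1 a b) else None
  | 2 => if (a != 1) && (b != 0) then Some (M2 a b) else None
  | 3 => if a * b != 0 then Some (M3 a b) else None
  | 4 => if b * a != 0 then Some (M4 a b) else None
  | 5 => if a * b != 0 then Some (M5 a b) else None
  | 6 => if a * b != 0 then Some (M6 a b) else None
  | 7 => if a * b != 0 then Some (M7 a b) else None
  | 8 => if a * b != 0 then Some (M8 a b) else None
  | _ => None
  end.
End Mats.

(* Main.v *)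
Require Import Defs.
From mathcomp Require Import all_boot all_algebra.
From mathcomp Require Import reals.
From mathcomp Require Import complex.
From mathcomp Require Import zify ring.
Import GRing.Theory.
Local Open Scope ring_scope.

Definition Lent {F : pzRingType} (M : 'M[F]_3) (i r k : nat) : F :=
  if [&& (i.-1 <= r)%N, (r < i.+2)%N, (i.-1 <= k)%N & (k < i.+2)%N]
  then M (inord (Nat.sub r i.-1)) (inord (Nat.sub k i.-1)) else (r == k)%:R.

Lemma local_mulE (F : pzRingType) n i (M : 'M[F]_3) (X : 'M[F]_(n.+1)) r c :
  (1 <= i <= 3)%N -> (4 <= n)%N -> (r < 5)%N ->
  (local_mx n i M *m X) (inord r) c = \sum_(k < 5) Lent M i r k * X (inord k) c.
Proof.
move=> /andP[i1 i3] n4 r5.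
rewrite mxE (big_ord_widen n.+1 (fun k => Lent M i r k * X (inord k) c)); last by lia.
rewrite [RHS]big_mkcond /=; apply: eq_bigr => k _.
have -> : local_mx n i M (inord r) k = Lent M i r k.
  have rn : (r < n.+1)%N by lia.
  have E : (inord r == k) = (r == k :> nat) by rewrite -val_eqE /= (inordK rn).
  by rewrite mxE (inordK rn) E.
rewrite inord_val.
case: (ltnP k 5) => k5; first by [].
rewrite /Lent.
have -> : (k < i.+2)%N = false.
  by apply/negbTE; move: k5 i3; lia.
rewrite !andbF.
have -> : (r == k) = false.
  by apply/negbTE; apply/eqP => rk; move: k5 r5; rewrite -rk; lia.
by rewrite mul0r.
Qed.

Lemma local_ent (F : pzRingType) n i (M : 'M[F]_3) r c :
  (4 <= n)%N -> (r < 5)%N -> (c < 5)%N ->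
  local_mx n i M (inord r) (inord c) = Lent M i r c.
Proof.
move=> n4 r5 c5.
have rn : (r < n.+1)%N by lia. have cn : (c < n.+1)%N by lia.
have E : (inord r == inord c :> 'I_n.+1) = (r == c) by rewrite -val_eqE /= !inordK.
by rewrite mxE E !inordK.
Qed.

Lemma triple (F : pzRingType) n i j (M : 'M[F]_3) r c :
  (1 <= i <= 3)%N -> (1 <= j <= 3)%N -> (4 <= n)%N -> (r < 5)%N -> (c < 5)%N ->
  (local_mx n i M *m local_mx n j M *m local_mx n i M) (inord r) (inord c) =
  \sum_(k < 5) Lent M i r k * \sum_(l < 5) Lent M j k l * Lent M i l c.
Proof.
move=> Hi Hj n4 r5 c5; rewrite -mulmxA local_mulE //; apply: eq_bigr => k _.
by rewrite local_mulE //; congr (_ * _); apply: eq_bigr => l _; rewrite local_ent.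
Qed.

Lemma double (F : pzRingType) n i j (M : 'M[F]_3) r c :
  (1 <= i <= 3)%N -> (4 <= n)%N -> (r < 5)%N -> (c < 5)%N ->
  (local_mx n i M *m local_mx n j M) (inord r) (inord c) =
  \sum_(k < 5) Lent M i r k * Lent M j k c.
Proof.
move=> Hi n4 r5 c5; rewrite local_mulE //; apply: eq_bigr => k _.
by rewrite local_ent.
Qed.

Lemma mul0P {F : fieldType} {x y : F} : x * y = 0 -> x = 0 \/ y = 0.
Proof. by move/eqP; rewrite mulf_eq0 => /orP[/eqP|/eqP]; [left|right]. Qed.

Lemma eq_of {F : fieldType} {x y z : F} (c : F) : z = 0 -> x - y = c * z -> x = y.
Proof. by move=> z0 H; apply/eqP; rewrite -subr_eq0 H z0 mulr0. Qed.

Lemma alg (F : fieldType) (a b d e f h k : F) :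
  (a - 1) * f = 0 -> (a - 1) * h = 0 -> (k - 1) * b = 0 -> (k - 1) * d = 0 ->
  b * f = 0 -> d * h = 0 ->
  a * (a + b * d - 1) = 0 ->
  b * (a * e + b * h) = 0 ->
  d * (a * e + d * f) = 0 ->
  - (a*b*h) - a*d*f + a*e^+2 - a^+2*e + b*d - b*d*k + b*e*h + d*e*f + e*f*h = 0 ->
  - (a*b*e) - b^+2*h + d*f^+2 + e*f*k = 0 ->
  - (a*d*e) + b*h^+2 - d^+2*f + e*h*k = 0 ->
  a*f*h - b*d*e - b*e*h + b*h*k - d*e*f + d*f*k + e*k^+2 - e^+2*k - f*h = 0 ->
  f * (d*f + e*k) = 0 ->
  h * (b*h + e*k) = 0 ->
  k * (1 - f*h - k) = 0 ->
  ~ (a = 0 /\ b = 0) -> ~ (d = 0 /\ e = 0 /\ f = 0) -> ~ (h = 0 /\ k = 0) ->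
  ~ (a = 0 /\ d = 0) -> ~ (b = 0 /\ e = 0 /\ h = 0) -> ~ (f = 0 /\ k = 0) ->
  ~ (a = 1 /\ b = 0 /\ d = 0 /\ e = 1 /\ f = 0 /\ h = 0 /\ k = 1) ->
  exists j x y, (1 <= j <= 8)%N /\
    nu_family j x y = Some (mx3 [:: [:: a; b; 0]; [:: d; e; f]; [:: 0; h; k]]).
Proof.
move=> cf ch cb cd bf dh B00 B01 B10 B11 B12 B21 B22 B23 B32 B33 R0 R1 R2 C0 C1 C2 NT.
have [a1|a1] := eqVneq a 1; last first.
  have a1' : a - 1 != 0 by rewrite subr_eq0.
  have f0 : f = 0 by case: (mul0P cf) => // /eqP; rewrite (negbTE a1').
  have h0 : h = 0 by case: (mul0P ch) => // /eqP; rewrite (negbTE a1').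
  subst f h.
  have k1 : k = 1.
    have : k * (1 - k) = 0 by rewrite -[RHS]B33; ring.
    case/mul0P => [k0|]; first by exfalso; apply: R2.
    by move/eqP; rewrite subr_eq0 => /eqP.
  subst k.
  have [a0|a0] := eqVneq a 0.
    subst a.
    have bn : b != 0 by apply/eqP => b0; apply: R0.
    have dn : d != 0 by apply/eqP => d0; apply: C0.
    have : e * (1 - b*d - e) = 0 by rewrite -[RHS]B22; ring.
    case/mul0P => [e0|E].
      subst e; exists 8%N, b, d; split => //=.
      by rewrite mulf_neq0.
    have ee : e = 1 - b * d by apply: (eq_of (-1) E); ring.
    exists 2%N, e, b; split => //=.
    have -> : e != 1 by rewrite ee -subr_eq0 addrAC subrr add0r oppr_eq0 mulf_neq0.
    rewrite bn /M2.
    have -> : (1 - e) / b = d by rewrite ee; field.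
    by [].
  have E1 : a + b * d - 1 = 0 by case: (mul0P B00) => // /eqP; rewrite (negbTE a0).
  have e0 : e = 0.
    have [//|en] := eqVneq e 0; exfalso.
    have b0 : b = 0.
      have : b * (a * e) = 0 by rewrite -[RHS]B01; ring.
      by case/mul0P => // /eqP; rewrite mulf_eq0 (negbTE a0) (negbTE en).
    have d0 : d = 0.
      have : d * (a * e) = 0 by rewrite -[RHS]B10; ring.
      by case/mul0P => // /eqP; rewrite mulf_eq0 (negbTE a0) (negbTE en).
    subst b d; move/eqP: a1; apply; apply: (eq_of 1 E1); ring.
  subst e.
  exists 6%N, b, d; split => //=.
  have bd : b * d != 0.
    apply/eqP => bd; move/eqP: a1; apply; apply: (eq_of 1 E1); rewrite bd; ring.
  rewrite bd /M6.
  have -> : 1 - b * d = a by apply: (eq_of (-1) E1); ring.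
  by [].
subst a.
have [k1|k1] := eqVneq k 1.
  subst k.
  have bd : b * d = 0 by rewrite -[RHS]B00; ring.
  have fh : f * h = 0 by apply: (eq_of (-1) B33); ring.
  have [b0|bn] := eqVneq b 0.
    subst b.
    have [d0|dn] := eqVneq d 0.
      subst d.
      have B11' : e^+2 - e + e * (f * h) = 0 by rewrite -[RHS]B11; ring.
      rewrite fh mulr0 addr0 in B11'.
      have : e * (e - 1) = 0 by rewrite -[RHS]B11'; ring.
      case/mul0P => [e0|].
        subst e; case: (mul0P fh) => [f0|h0].
          by exfalso; apply: R1.
        by exfalso; apply: C1.
      move/eqP; rewrite subr_eq0 => /eqP e1; subst e.
      have f0 : f = 0 by rewrite -[RHS]B23; ring.
      have h0 : h = 0 by rewrite -[RHS]B32; ring.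
      by exfalso; apply: NT.
    have h0 : h = 0 by case: (mul0P dh) => // /eqP; rewrite (negbTE dn).
    subst h.
    have E : e + d * f = 0.
      have : d * (e + d * f) = 0 by rewrite -[RHS]B10; ring.
      by case/mul0P => // /eqP; rewrite (negbTE dn).
    have fn : f != 0.
      apply/eqP => f0; subst f; apply: C1; split => //; split => //.
      by rewrite -[RHS]E; ring.
    have en : e != 0.
      apply/eqP => e0; subst e; move/eqP: E; rewrite add0r mulf_eq0 (negbTE dn) (negbTE fn).
      by [].
    exists 4%N, e, f; split => //=.
    rewrite mulf_neq0 // /M4.
    have -> : - (e / f) = d.
      have ee : e = - (d * f) by apply: (eq_of 1 E); ring.
      by rewrite ee; field.
    by [].
  have f0 : f = 0 by case: (mul0P bf) => // /eqP; rewrite (negbTE bn).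
  have d0 : d = 0 by case: (mul0P bd) => // /eqP; rewrite (negbTE bn).
  subst f d.
  have E : e + b * h = 0.
    have : b * (e + b * h) = 0 by rewrite -[RHS]B01; ring.
    by case/mul0P => // /eqP; rewrite (negbTE bn).
  have hn : h != 0.
    apply/eqP => h0; subst h; apply: R1; split => //; split => //.
    by rewrite -[RHS]E; ring.
  have en : e != 0.
    apply/eqP => e0; subst e; move/eqP: E; rewrite add0r mulf_eq0 (negbTE bn) (negbTE hn).
    by [].
  exists 3%N, e, h; split => //=.
  rewrite mulf_neq0 // /M3.
  have -> : - (e / h) = b.
    have ee : e = - (b * h) by apply: (eq_of 1 E); ring.
    by rewrite ee; field.
  by [].
have k1' : k - 1 != 0 by rewrite subr_eq0.
have b0 : b = 0 by case: (mul0P cb) => // /eqP; rewrite (negbTE k1').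
have d0 : d = 0 by case: (mul0P cd) => // /eqP; rewrite (negbTE k1').
subst b d.
have [e0|en] := eqVneq e 0.
  subst e.
  have fn : f != 0 by apply/eqP => f0; apply: R1.
  have hn : h != 0 by apply/eqP => h0; apply: C1.
  case: (mul0P B33) => [k0|E].
    subst k; exists 7%N, f, h; split => //=.
    by rewrite mulf_neq0.
  have -> : k = 1 - f * h by apply: (eq_of (-1) E); ring.
  exists 5%N, f, h; split => //=.
  by rewrite mulf_neq0.
have E : e - 1 + f * h = 0.
  have : e * (e - 1 + f * h) = 0 by rewrite -[RHS]B11; ring.
  by case/mul0P => // /eqP; rewrite (negbTE en).
have k0 : k = 0.
  have [//|kn] := eqVneq k 0; exfalso.
  have f0 : f = 0.
    have : f * (e * k) = 0 by rewrite -[RHS]B12; ring.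
    by case/mul0P => // /eqP; rewrite mulf_eq0 (negbTE en) (negbTE kn).
  have h0 : h = 0.
    have : h * (e * k) = 0 by rewrite -[RHS]B21; ring.
    by case/mul0P => // /eqP; rewrite mulf_eq0 (negbTE en) (negbTE kn).
  subst f h.
  have e1 : e = 1 by apply: (eq_of 1 E); ring.
  subst e.
  have : k * (k - 1) = 0 by rewrite -[RHS]B22; ring.
  by case/mul0P => // /eqP; rewrite ?(negbTE kn) ?(negbTE k1').
subst k.
have fn : f != 0 by apply/eqP => f0; apply: C2.
have hn : h != 0 by apply/eqP => h0; apply: R2.
have ee : e = 1 - f * h by apply: (eq_of 1 E); ring.
exists 1%N, e, f; split => //=.
have -> : e != 1 by rewrite ee -subr_eq0 addrAC subrr add0r oppr_eq0 mulf_neq0.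
rewrite fn /M1.
have -> : (1 - e) / f = h by rewrite ee; field.
by [].
Qed.
Lemma mx3_1 (F : fieldType) : mx3 [:: [:: (1:F); 0; 0]; [:: 0; 1; 0]; [:: 0; 0; 1]] = 1%:M.
Proof.
apply/matrixP => r s; rewrite !mxE.
by case: r => [[|[|[|?]]] ?]; case: s => [[|[|[|?]]] ?].
Qed.

Lemma mx3_eta (F : fieldType) (M : 'M[F]_3) : M = mx3
  [:: [:: M (inord 0) (inord 0); M (inord 0) (inord 1); M (inord 0) (inord 2)];
      [:: M (inord 1) (inord 0); M (inord 1) (inord 1); M (inord 1) (inord 2)];
      [:: M (inord 2) (inord 0); M (inord 2) (inord 1); M (inord 2) (inord 2)]].
Proof.
apply/matrixP => r s; rewrite !mxE.
by case: r => [[|[|[|?]]] ?]; case: s => [[|[|[|?]]] ?] //=; congr (M _ _); apply/val_inj; rewrite /= inordK.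
Qed.

Lemma local_mx1 (F : fieldType) n i : local_mx n i (1%:M : 'M[F]_3) = 1%:M.
Proof.
apply/matrixP => r s; rewrite !mxE.
case: ifP => // /and4P[h1 h2 h3 h4].
congr (_%:R); congr (nat_of_bool _); rewrite -val_eqE /= !inordK; try lia.
have [->|rs] := eqVneq r s; first by rewrite eqxx.
apply: negbTE; apply/eqP => H; move/eqP: rs; apply; apply/val_inj => /=; lia.
Qed.

Lemma row_notunit (F : fieldType) n (M : 'M[F]_3) r : (4 <= n)%N -> (r < 3)%N ->
  M (inord r) (inord 0) = 0 -> M (inord r) (inord 1) = 0 -> M (inord r) (inord 2) = 0 ->
  local_mx n 1 M \notin unitmx.
Proof.
move=> n4 r3 H0 H1 H2; apply/negP => U.
move: (mulmxV U) => /matrixP/(_ (inord r) (inord r)).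
rewrite [RHS]mxE eqxx mxE big1 => [/eqP|j _]; first by rewrite eq_sym oner_eq0.
rewrite mxE inordK; last by lia.
case: ifP => [/and4P[_ _ _ j3]|/negbT cond].
  rewrite /= !subn0.
  by move: (j : nat) j3 => [|[|[|?]]] // _; rewrite ?H0 ?H1 ?H2 mul0r.
have -> : (inord r == j) = false.
  apply/negbTE/eqP => rj; move: cond; rewrite -rj /= inordK; last by lia.
  by rewrite r3.
by rewrite mul0r.
Qed.

Lemma col_notunit (F : fieldType) n (M : 'M[F]_3) r : (4 <= n)%N -> (r < 3)%N ->
  M (inord 0) (inord r) = 0 -> M (inord 1) (inord r) = 0 -> M (inord 2) (inord r) = 0 ->
  local_mx n 1 M \notin unitmx.
Proof.
move=> n4 r3 H0 H1 H2; apply/negP => U.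
move: (mulVmx U) => /matrixP/(_ (inord r) (inord r)).
rewrite [RHS]mxE eqxx mxE big1 => [/eqP|j _]; first by rewrite eq_sym oner_eq0.
rewrite mxE inordK; last by lia.
case: ifP => [/and4P[_ j3 _ _]|/negbT cond].
  rewrite /= !subn0.
  by move: (j : nat) j3 => [|[|[|?]]] // _; rewrite ?H0 ?H1 ?H2 mulr0.
have -> : (j == inord r) = false.
  apply/negbTE/eqP => rj; move: cond; rewrite rj /= inordK; last by lia.
  by rewrite r3.
by rewrite mulr0.
Qed.

Lemma eqz {F : fieldType} {x y : F} (p : F) : x = y -> x - y = p -> p = 0.
Proof. by move=> -> <-; rewrite subrr. Qed.
Lemma eqzN {F : fieldType} {x y : F} (p : F) : x = y -> y - x = p -> p = 0.
Proof. by move=> -> <-; rewrite subrr. Qed.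

Lemma entry_eq {T : Type} {m k : nat} {A B : 'M[T]_(m, k)} (i : 'I_m) (j : 'I_k) :
  A = B -> A i j = B i j.
Proof. by move=> ->. Qed.

Lemma classify (F : fieldType) n (M : 'M[F]_3) :
  (4 <= n)%N -> homog_3local n M -> nontrivial_rep (fun i => local_mx n i M) ->
  let L := mx3 [:: [:: M (inord 0) (inord 0); M (inord 0) (inord 1); 0];
      [:: M (inord 1) (inord 0); M (inord 1) (inord 1); M (inord 1) (inord 2)];
      [:: 0; M (inord 2) (inord 1); M (inord 2) (inord 2)]] in
  M = L /\ exists j x y, (1 <= j <= 8)%N /\ nu_family j x y = Some L.
Proof.
move=> n4 [Hu Hb Hc] [i0 [Hi0 Hnt]].
have U := Hu 1%N ltac:(apply/andP; split => //; lia).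
have B := Hb 1%N isT ltac:(lia).
have C := Hc 1%N 3%N ltac:(apply/andP; split => //; lia) ltac:(apply/andP; split => //; lia) isT.
Ltac ceq C r c := have := entry_eq (inord r) (inord c) C; rewrite /= !double //;
  rewrite !big_ord_recr !big_ord0 /= /Lent /= ?(mul0r,mulr0,add0r,addr0,mul1r,mulr1).
Ltac beq B r c := have := entry_eq (inord r) (inord c) B; rewrite /= !triple //;
  rewrite !big_ord_recr !big_ord0 /= /Lent /= ?(mul0r,mulr0,add0r,addr0,mul1r,mulr1).
have c0 : M (inord 0) (inord 2) = 0.
  ceq C 0%N 4%N => H; have := eqz _ H erefl; rewrite subr0.
  by case/mul0P.
have g0 : M (inord 2) (inord 0) = 0.
  ceq C 4%N 0%N => H; have := eqzN _ H erefl; rewrite subr0.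
  by case/mul0P.
have R0 : ~ (M (inord 0) (inord 0) = 0 /\ M (inord 0) (inord 1) = 0).
  by case=> H0 H1; move: U; apply/negP; apply: (@row_notunit F n M 0 n4 isT H0 H1 c0).
have R1 : ~ (M (inord 1) (inord 0) = 0 /\ M (inord 1) (inord 1) = 0 /\ M (inord 1) (inord 2) = 0).
  by case=> H0 [H1 H2]; move: U; apply/negP; apply: (@row_notunit F n M 1 n4 isT H0 H1 H2).
have R2 : ~ (M (inord 2) (inord 1) = 0 /\ M (inord 2) (inord 2) = 0).
  by case=> H1 H2; move: U; apply/negP; apply: (@row_notunit F n M 2 n4 isT g0 H1 H2).
have C0 : ~ (M (inord 0) (inord 0) = 0 /\ M (inord 1) (inord 0) = 0).
  by case=> H0 H1; move: U; apply/negP; apply: (@col_notunit F n M 0 n4 isT H0 H1 g0).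
have C1 : ~ (M (inord 0) (inord 1) = 0 /\ M (inord 1) (inord 1) = 0 /\ M (inord 2) (inord 1) = 0).
  by case=> H0 [H1 H2]; move: U; apply/negP; apply: (@col_notunit F n M 1 n4 isT H0 H1 H2).
have C2 : ~ (M (inord 1) (inord 2) = 0 /\ M (inord 2) (inord 2) = 0).
  by case=> H1 H2; move: U; apply/negP; apply: (@col_notunit F n M 2 n4 isT c0 H1 H2).
have NT : ~ (M (inord 0) (inord 0) = 1 /\ M (inord 0) (inord 1) = 0 /\ M (inord 1) (inord 0) = 0 /\
    M (inord 1) (inord 1) = 1 /\ M (inord 1) (inord 2) = 0 /\ M (inord 2) (inord 1) = 0 /\
    M (inord 2) (inord 2) = 1).
  case=> [h00 [h01 [h10 [h11 [h12 [h21 h22]]]]]].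
  have M1 : M = 1%:M by rewrite [LHS]mx3_eta c0 g0 h00 h01 h10 h11 h12 h21 h22 mx3_1.
  by move: Hnt; rewrite M1 local_mx1 eqxx.
split; first by rewrite [LHS]mx3_eta c0 g0.
apply: (@alg F (M (inord 0) (inord 0)) (M (inord 0) (inord 1)) (M (inord 1) (inord 0))
  (M (inord 1) (inord 1)) (M (inord 1) (inord 2)) (M (inord 2) (inord 1)) (M (inord 2) (inord 2)))
  => //.
- by ceq C 1%N 2%N; rewrite ?c0 ?g0 => H; apply: (eqz _ H); ring.
- by ceq C 2%N 1%N; rewrite ?c0 ?g0 => H; apply: (eqzN _ H); ring.
- by ceq C 2%N 3%N; rewrite ?c0 ?g0 => H; apply: (eqz _ H); ring.
- by ceq C 3%N 2%N; rewrite ?c0 ?g0 => H; apply: (eqzN _ H); ring.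
- by ceq C 1%N 3%N; rewrite ?c0 ?g0 => H; apply: (eqz _ H); ring.
- by ceq C 3%N 1%N; rewrite ?c0 ?g0 => H; apply: (eqzN _ H); ring.
- by beq B 0%N 0%N; rewrite ?c0 ?g0 => H; apply: (eqz _ H); ring.
- by beq B 0%N 1%N; rewrite ?c0 ?g0 => H; apply: (eqz _ H); ring.
- by beq B 1%N 0%N; rewrite ?c0 ?g0 => H; apply: (eqz _ H); ring.
- by beq B 1%N 1%N; rewrite ?c0 ?g0 => H; apply: (eqz _ H); ring.
- by beq B 1%N 2%N; rewrite ?c0 ?g0 => H; apply: (eqz _ H); ring.
- by beq B 2%N 1%N; rewrite ?c0 ?g0 => H; apply: (eqz _ H); ring.
- by beq B 2%N 2%N; rewrite ?c0 ?g0 => H; apply: (eqz _ H); ring.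
- by beq B 2%N 3%N; rewrite ?c0 ?g0 => H; apply: (eqzN _ H); ring.
- by beq B 3%N 2%N; rewrite ?c0 ?g0 => H; apply: (eqzN _ H); ring.
- by beq B 3%N 3%N; rewrite ?c0 ?g0 => H; apply: (eqz _ H); ring.
Qed.

Theorem theorem4p1 (R : realType) (n : nat) (M : 'M[R[i]]_3) :
  (4 <= n)%N ->
  homog_3local n M ->
  nontrivial_rep (fun i => local_mx n i M) ->
  exists (j : nat) (a b : R[i]) (Mj : 'M[R[i]]_3),
    [/\ (1 <= j <= 8)%N, nu_family j a b = Some Mj &
        equiv_rep (fun i => local_mx n i M) (fun i => local_mx n i Mj)].
Proof.
move=> n4 H Hnt.
have [EM [j [x [y [Hj Hn]]]]] := @classify _ n M n4 H Hnt.
exists j, x, y; eexists; split; [exact: Hj | exact: Hn |].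
exists 1%:M; split; first exact: unitmx1.
move=> i _ /=; rewrite invmx1 mul1mx mulmx1.
by rewrite {1}EM.
Qed.
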